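(* $\mathrm{cof}^{*}(\mathcal{S}pl)=\mathfrak{c}$.
   Context: For an infinite $A\subseteq\omega$, let $S(A)$ be the set of all $\sigma\in2^{<\omega}$ such that $\sigma$ is constant on $A\cap\mathrm{dom}(\sigma)$. The splitting ideal $\mathcal{S}pl$ is the ideal on $2^{<\omega}$ generated by the sets $S(A)$, $A\in[\omega]^{\omega}$. For an ideal $\mathcal{J}$, $\mathrm{cof}^*(\mathcal{J})=\min\{|\mathcal{F}|:\mathcal{F}\subseteq\mathcal{J}$ and for every $Y\in\mathcal{J}$ there is $F\in\mathcal{F}$ with $Y\subseteq^{*}F\}$. *)

(* Defs.v *)
(* 2^{<omega} = list bool; subsets are predicates. *)
From Stdlib Require Import List Arith.
Import ListNotations.

Definition infinite_nat (A : nat -> Prop) : Prop :=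
  forall n, exists m, n <= m /\ A m.

Definition S (A : nat -> Prop) (s : list bool) : Prop :=
  forall i j, A i -> A j -> i < length s -> j < length s ->
    nth i s false = nth j s false.

Definition finite_set (P : list bool -> Prop) : Prop :=
  exists l : list (list bool), forall x, P x -> In x l.

Definition Spl (Y : list bool -> Prop) : Prop :=
  exists As : list (nat -> Prop),
    (forall A, In A As -> infinite_nat A) /\
    (forall s, Y s -> exists A, In A As /\ S A s).

Definition subset_star (Y X : list bool -> Prop) : Prop :=
  finite_set (fun s => Y s /\ ~ X s).

Definition cofinal_Spl (F : (list bool -> Prop) -> Prop) : Prop :=
  (forall X, F X -> Spl X) /\
  (forall Y, Spl Y -> exists X, F X /\ subset_star Y X).

(* Cardinal comparisons with the continuum c = |2^omega|, via injections. *)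
Definition card_le_c {T : Type} (P : T -> Prop) : Prop :=
  exists f : {x : T | P x} -> (nat -> bool),
    forall a b, f a = f b -> a = b.
Definition c_le_card {T : Type} (P : T -> Prop) : Prop :=
  exists g : (nat -> bool) -> {x : T | P x},
    forall a b, g a = g b -> a = b.

(* Main.v *)
Require Import Defs.
From Stdlib Require Import List Arith Lia Classical ClassicalEpsilon FunctionalExtensionality PropExtensionality ProofIrrelevance Cantor.
Import ListNotations.

Fixpoint code (l : list bool) : nat :=
  match l with
  | [] => 0
  | b :: l' => (if b then 2 else 1) + 2 * code l'
  end.

Lemma code_inj : forall l1 l2, code l1 = code l2 -> l1 = l2.
Proof.
  induction l1 as [|b l1 IH]; destruct l2 as [|b' l2]; simpl; intros H.
  - reflexivity.
  - destruct b'; lia.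
  - destruct b; lia.
  - destruct b, b'; try lia; f_equal; apply IH; lia.
Qed.

Lemma code_ge : forall l, length l <= code l.
Proof. induction l as [|b l IH]; simpl; [lia| destruct b; lia]. Qed.

Definition prefix (r : nat -> bool) n := map r (seq 0 n).

Lemma prefix_len r n : length (prefix r n) = n.
Proof. unfold prefix; rewrite length_map, length_seq; auto. Qed.

Lemma prefix_nth r n i : i < n -> nth i (prefix r n) false = r i.
Proof.
  intros H; unfold prefix.
  rewrite (nth_indep _ false (r 0)) by (rewrite length_map, length_seq; auto).
  rewrite map_nth, seq_nth; auto.
Qed.

Definition Ar (r : nat -> bool) (m : nat) : Prop := exists n, m = code (prefix r n).

Lemma Ar_inf r : infinite_nat (Ar r).
Proof.
  intros n; exists (code (prefix r n)); split.
  - pose proof (code_ge (prefix r n)); rewrite prefix_len in H; auto.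
  - exists n; auto.
Qed.

Lemma le_list_max : forall l x, In x l -> x <= list_max l.
Proof.
  induction l as [|a l IH]; simpl; intros x H; [contradiction|].
  destruct H as [<-|H]; [lia|]. specialize (IH x H); lia.
Qed.

Lemma AD (r s : nat -> bool) (C : nat -> Prop) n1 n2 :
  infinite_nat C ->
  (forall m, n1 <= m -> C m -> Ar r m) ->
  (forall m, n2 <= m -> C m -> Ar s m) -> r = s.
Proof.
  intros HC H1 H2. apply functional_extensionality; intros k.
  set (bnd := list_max (map (fun n => code (prefix r n)) (seq 0 (k+1)))).
  destruct (HC (n1 + n2 + bnd + 1)) as [m [Hm Cm]].
  destruct (H1 m ltac:(lia) Cm) as [n Hn].
  destruct (H2 m ltac:(lia) Cm) as [n' Hn'].
  assert (Hk : k < n).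
  { destruct (le_lt_dec n k) as [Hle|]; auto.
    assert (In (code (prefix r n)) (map (fun n => code (prefix r n)) (seq 0 (k+1)))).
    { apply (in_map (fun n => code (prefix r n))). apply in_seq. simpl. lia. }
    apply le_list_max in H. fold bnd in H. lia. }
  assert (E : prefix r n = prefix s n') by (apply code_inj; congruence).
  assert (n = n') by (rewrite <- (prefix_len r n), <- (prefix_len s n'), E; auto).
  subst n'.
  rewrite <- (prefix_nth r n k Hk), <- (prefix_nth s n k Hk), E; auto.
Qed.

Lemma coloring (A : nat -> Prop) : forall As : list (nat -> Prop),
  (forall C, In C As -> forall n, exists m, n <= m /\ C m /\ ~ A m) ->
  exists (f : nat -> bool) M, (forall n, A n -> f n = false) /\
    (forall C, In C As -> exists i j, i < M /\ j < M /\ C i /\ C j /\ f i <> f j).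
Proof.
  induction As as [|C l IH]; intros H.
  - exists (fun _ => false), 0; split; auto. intros C [].
  - destruct IH as [f [M [Hf HM]]]. { intros; apply H; simpl; auto. }
    destruct (H C (or_introl eq_refl) M) as [p [Hp [Cp Ap]]].
    destruct (H C (or_introl eq_refl) (p+1)) as [q [Hq [Cq Aq]]].
    exists (fun n => if Nat.eqb n q then true else if Nat.eqb n p then false else f n), (q+1).
    split.
    + intros n An. destruct (Nat.eqb_spec n q); [subst; contradiction|].
      destruct (Nat.eqb_spec n p); [subst; contradiction|]. auto.
    + intros C' [<-|HC'].
      * exists p, q. repeat split; auto; try lia.
        rewrite (proj2 (Nat.eqb_neq p q)) by lia. rewrite !Nat.eqb_refl. discriminate.
      * destruct (HM C' HC') as [i [j [Hi [Hj [Ci [Cj Hij]]]]]].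
        exists i, j. repeat split; auto; try lia.
        rewrite (proj2 (Nat.eqb_neq i q)) by lia. rewrite (proj2 (Nat.eqb_neq i p)) by lia.
        rewrite (proj2 (Nat.eqb_neq j q)) by lia. rewrite (proj2 (Nat.eqb_neq j p)) by lia. auto.
Qed.

Lemma key (A : nat -> Prop) (As : list (nat -> Prop)) (X : list bool -> Prop) :
  (forall s, X s -> exists C, In C As /\ S C s) ->
  subset_star (S A) X ->
  exists C, In C As /\ exists n0, forall m, n0 <= m -> C m -> A m.
Proof.
  intros Hcov [lst Hlst].
  destruct (classic (forall C, In C As -> forall n, exists m, n <= m /\ C m /\ ~ A m)) as [Hall|Hn].
  - exfalso. destruct (coloring A As Hall) as [f [M [Hf HM]]].
    set (N := M + list_max (map (@length bool) lst) + 1).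
    set (sg := prefix f N).
    assert (HS : S A sg).
    { intros i j Ai Aj Hi Hj. unfold sg in *. rewrite prefix_len in Hi, Hj.
      rewrite !prefix_nth by auto. rewrite (Hf i Ai), (Hf j Aj); auto. }
    assert (HX : ~ X sg).
    { intros HX. destruct (Hcov sg HX) as [C [HC SC]].
      destruct (HM C HC) as [i [j [Hi [Hj [Ci [Cj Hij]]]]]].
      apply Hij. unfold sg in SC. pose proof (SC i j Ci Cj).
      rewrite !prefix_len, !prefix_nth in H by lia. apply H; lia. }
    pose proof (Hlst sg (conj HS HX)) as Hin.
    apply (in_map (@length bool)) in Hin. apply le_list_max in Hin.
    unfold sg in Hin. rewrite prefix_len in Hin. unfold N in Hin. lia.
  - apply not_all_ex_not in Hn. destruct Hn as [C HC].
    apply imply_to_and in HC. destruct HC as [HC Hn].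
    apply not_all_ex_not in Hn. destruct Hn as [n0 Hn0].
    exists C; split; auto. exists n0. intros m Hm Cm.
    apply NNPP; intros Am. apply Hn0. exists m; auto.
Qed.

Definition E (a : nat -> nat -> bool) : nat -> bool :=
  fun k => a (fst (Cantor.of_nat k)) (snd (Cantor.of_nat k)).

Lemma E_inj a b : E a = E b -> a = b.
Proof.
  intros H. apply functional_extensionality; intro i; apply functional_extensionality; intro j.
  pose proof (f_equal (fun f => f (Cantor.to_nat (i, j))) H) as H'. unfold E in H'.
  rewrite Cantor.cancel_of_to in H'. exact H'.
Qed.


Lemma part1 : exists F : (list bool -> Prop) -> Prop, cofinal_Spl F /\ card_le_c F.
Proof.
  exists Spl. split.
  - split; auto. intros Y HY. exists Y; split; auto. exists []. intros x [Hx Hn]; contradiction.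
  - exists (fun X n => if excluded_middle_informative (exists s, code s = n /\ proj1_sig X s) then true else false).
    intros [a Ha] [b Hb] H; simpl in H.
    assert (a = b).
    { apply functional_extensionality; intro s. apply propositional_extensionality.
      pose proof (f_equal (fun f => f (code s)) H) as H'; simpl in H'.
      destruct (excluded_middle_informative (exists s0, code s0 = code s /\ a s0)) as [[s0 [E1 E2]]|N1];
      destruct (excluded_middle_informative (exists s0, code s0 = code s /\ b s0)) as [[s1 [E3 E4]]|N2];
      try discriminate.
      - apply code_inj in E1; apply code_inj in E3; subst; tauto.
      - split; intros Hs; exfalso; [apply N1 | apply N2]; eauto.
    }
    subst b. f_equal. apply proof_irrelevance.
Qed.

Lemma part2 (F : (list bool -> Prop) -> Prop) : cofinal_Spl F -> c_le_card F.
Proof.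
  intros [HFS HFc].
  assert (HY : forall a, exists X, F X /\ subset_star (S (Ar (E a))) X).
  { intros a. apply HFc. exists [Ar (E a)]. split.
    - intros A [<-|[]]. apply Ar_inf.
    - intros s Hs. exists (Ar (E a)); split; simpl; auto. }
  set (Xa := fun a => proj1_sig (constructive_indefinite_description _ (HY a))).
  assert (HXa : forall a, F (Xa a) /\ subset_star (S (Ar (E a))) (Xa a)).
  { intros a. unfold Xa. destruct (constructive_indefinite_description _ (HY a)); auto. }
  set (cov := fun X => match excluded_middle_informative (Spl X) with
                       | left H => proj1_sig (constructive_indefinite_description _ H)
                       | right _ => [] end).
  assert (Hcov : forall X, Spl X -> (forall A, In A (cov X) -> infinite_nat A) /\
      (forall s, X s -> exists A, In A (cov X) /\ S A s)).
  { intros X HX. unfold cov. destruct (excluded_middle_informative (Spl X)); [|contradiction].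
    destruct (constructive_indefinite_description _ s); auto. }
  set (pick := fun C : nat -> Prop =>
     match excluded_middle_informative (exists r n0, forall m, n0 <= m -> C m -> Ar r m) with
     | left H => proj1_sig (constructive_indefinite_description _ H)
     | right _ => fun _ => false end).
  set (L := fun X => map pick (cov X)).
  assert (HL : forall a, In (E a) (L (Xa a))).
  { intros a. destruct (HXa a) as [HF Hs]. destruct (Hcov _ (HFS _ HF)) as [Hinf Hc].
    destruct (key _ _ _ Hc Hs) as [C [HC [n0 Hn0]]].
    unfold L. replace (E a) with (pick C). { apply in_map; auto. }
    unfold pick. destruct (excluded_middle_informative _) as [H|H].
    - destruct (constructive_indefinite_description _ H) as [r Hr]; simpl.
      destruct Hr as [n1 Hn1]. eapply AD; [apply Hinf; exact HC | exact Hn1 | exact Hn0].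
    - exfalso; apply H; eauto. }
  set (na := fun a => proj1_sig (constructive_indefinite_description _
               (In_nth _ _ (fun _ => false) (HL a)))).
  assert (Hna : forall a, nth (na a) (L (Xa a)) (fun _ => false) = E a).
  { intros a. unfold na. destruct (constructive_indefinite_description _ _) as [n [Hlt Hn]]; auto. }
  destruct (classic (exists n, forall b, exists a, na a = n /\ a n = b)) as [[n Hn]|Hno].
  - set (ab := fun b => proj1_sig (constructive_indefinite_description _ (Hn b))).
    assert (Hab : forall b, na (ab b) = n /\ ab b n = b).
    { intros b; unfold ab; destruct (constructive_indefinite_description _ _); auto. }
    exists (fun b => exist F (Xa (ab b)) (proj1 (HXa (ab b)))).
    intros b b' H. apply (f_equal (@proj1_sig _ _)) in H; simpl in H.
    destruct (Hab b) as [H1 H2]; destruct (Hab b') as [H3 H4].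
    assert (E (ab b) = E (ab b')).
    { rewrite <- Hna, <- (Hna (ab b')), H1, H3, H; auto. }
    apply E_inj in H0. rewrite <- H2, <- H4, H0; auto.
  - exfalso.
    assert (Hb : forall n, exists b, ~ exists a, na a = n /\ a n = b).
    { intros n. apply NNPP; intro Hc. apply Hno. exists n. intros b.
      apply NNPP; intro Hd. apply Hc. exists b. exact Hd. }
    set (a := fun n => proj1_sig (constructive_indefinite_description _ (Hb n))).
    assert (Ha : forall n, ~ exists a', na a' = n /\ a' n = a n).
    { intros n. exact (proj2_sig (constructive_indefinite_description _ (Hb n))). }
    apply (Ha (na a)). exists a; auto.
Qed.

Theorem mainTheorem12 :
  (exists F : (list bool -> Prop) -> Prop, cofinal_Spl F /\ card_le_c F) /\
  (forall F : (list bool -> Prop) -> Prop, cofinal_Spl F -> c_le_card F).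
Proof.
  split; [apply part1 | apply part2].
Qed.
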